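(* Let $\mathcal{C}$ be a Fraïssé class of rigid finite structures over a finite relational language with Fraïssé limit $M$, and let $A_0\in\mathcal{C}$ be a $2$-element structure. Let $D$ be a directed graph on the domain of $M$ defined by a parameter-free first-order formula $\varphi(x,y)$ such that for every pair $\{x,y\}$ of distinct elements inducing a copy of $A_0$ exactly one of $\varphi(x,y),\varphi(y,x)$ holds, and $D$ has no other arcs. If $D$ contains a directed cycle, then with $A=A_0$ and $B$ the substructure of $M$ induced on the vertex set of that cycle, for every $C\in\mathcal{C}$ there is a $2$-colouring of the embeddings $A\to C$ with no monochromatic embedding $B\to C$; in particular $\mathcal{C}$ is not a Ramsey class.
   Context: A Fraïssé class is a class of finite non-empty structures closed under isomorphism and induced substructures with the joint embedding and amalgamation properties; its Fraïssé limit is the unique countable homogeneous structure whose age is the class. Rigid: trivial automorphism group. Since members of $\mathcal{C}$ embed in $M$ and $\varphi$ is preserved by isomorphisms between finite substructures (by homogeneity), $\varphi$ determines a direction on each copy of $A_0$ in any $C\in\mathcal{C}$. An embedding $g:B\to C$ is monochromatic for a colouring of embeddings $A\to C$ if all embeddings $A\to C$ with image inside $g(B)$ have the same colour. Ramsey class: for all $A,B$ in the class there is $C$ such that every $2$-colouring of embeddings $A\to C$ admits a monochromatic embedding $B\to C$. *)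

(* Defs.v *)
From mathcomp Require Import all_boot.
Set Implicit Arguments. Unset Strict Implicit. Unset Printing Implicit Defensive.

Record language := Language { sym : finType; arity : sym -> nat }.

Definition structure (L : language) (T : Type) :=
  forall s : sym L, ('I_(arity s) -> T) -> Prop.

Record finstruct (L : language) := FinStruct {
  fcar : finType;
  fint : structure L fcar }.
Arguments fcar {L} _.
Arguments fint {L} _.

Definition is_emb (L : language) (T1 T2 : Type)
  (I1 : structure L T1) (I2 : structure L T2) (f : T1 -> T2) : Prop :=
  injective f /\ forall (s : sym L) (t : 'I_(arity s) -> T1), I1 s t <-> I2 s (f \o t).

Definition femb (L : language) (A B : finstruct L) (f : fcar A -> fcar B) :=
  @is_emb L (fcar A) (fcar B) (@fint L A) (@fint L B) f.

Definition fclass (L : language) := finstruct L -> Prop.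

Definition rigid (L : language) (A : finstruct L) : Prop :=
  forall f : fcar A -> fcar A, femb f -> bijective f -> forall a, f a = a.

(* Fraisse class: non-empty members, non-empty class, closed under isomorphism
   and induced substructures (= embedded non-empty structures), JEP and AP. *)
Definition fraisse_class (L : language) (C : fclass L) : Prop :=
  (exists A, C A) /\ (forall A, C A -> 0 < #|fcar A|) /\
  [/\
      forall A B (f : fcar A -> fcar B), C A -> femb f -> bijective f -> C B,
      forall A B (f : fcar A -> fcar B), C B -> 0 < #|fcar A| -> femb f -> C A,
      (forall A B, C A -> C B -> exists E, C E /\
          (exists f : fcar A -> fcar E, femb f) /\ (exists g : fcar B -> fcar E, femb g))
    & forall A B1 B2 (f1 : fcar A -> fcar B1) (f2 : fcar A -> fcar B2),
        C A -> C B1 -> C B2 -> femb f1 -> femb f2 ->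
        exists E (g1 : fcar B1 -> fcar E) (g2 : fcar B2 -> fcar E),
          [/\ C E, femb g1, femb g2 & forall a, g1 (f1 a) = g2 (f2 a)]].

(* M (countable carrier) is homogeneous: every isomorphism between finite
   substructures (equivalently, any two embeddings of a finite structure)
   extends to an automorphism. *)
Definition homogeneous (L : language) (TM : Type) (IM : structure L TM) : Prop :=
  forall (A : finstruct L) (f g : fcar A -> TM),
    is_emb (fint A) IM f -> is_emb (fint A) IM g ->
    exists sigma : TM -> TM,
      [/\ is_emb IM IM sigma, bijective sigma & forall a, sigma (f a) = g a].

Definition age_is (L : language) (TM : Type) (IM : structure L TM) (C : fclass L) :=
  forall A : finstruct L,
    C A <-> (0 < #|fcar A| /\ exists f : fcar A -> TM, is_emb (fint A) IM f).

Definition fraisse_limit (L : language) (TM : countType) (IM : structure L TM)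
  (C : fclass L) : Prop := homogeneous IM /\ age_is IM C.

Inductive formula (L : language) :=
  | FRel (s : sym L) of ('I_(arity s) -> nat)
  | FEq of nat & nat
  | FNeg of formula L
  | FAnd of formula L & formula L
  | FOr of formula L & formula L
  | FEx of nat & formula L
  | FAll of nat & formula L.

Fixpoint sat (L : language) (T : Type) (I : structure L T) (v : nat -> T)
  (phi : formula L) {struct phi} : Prop :=
  match phi with
  | FRel s vs => I s (fun i => v (vs i))
  | FEq i j => v i = v j
  | FNeg p => ~ sat I v p
  | FAnd p q => sat I v p /\ sat I v q
  | FOr p q => sat I v p \/ sat I v q
  | FEx n p => exists x : T, sat I (fun m => if m == n then x else v m) p
  | FAll n p => forall x : T, sat I (fun m => if m == n then x else v m) p
  end.

Definition defined_rel (L : language) (T : Type) (I : structure L T)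
  (phi : formula L) (x y : T) : Prop :=
  sat I (fun n => if n == 0 then x else y) phi.

Definition induces_copy (L : language) (T : Type) (I : structure L T)
  (A0 : finstruct L) (x y : T) : Prop :=
  exists e : fcar A0 -> T, is_emb (fint A0) I e /\
    (forall a, e a = x \/ e a = y) /\ (exists a, e a = x) /\ (exists a, e a = y).

Definition induced (L : language) (T : choiceType) (I : structure L T) (s : seq T)
  : finstruct L :=
  @FinStruct L (seq_sub s) (fun r t => I r (fun i => val (t i))).

Definition monochromatic (L : language) (A B E : finstruct L)
  (c : (fcar A -> fcar E) -> bool) (g : fcar B -> fcar E) : Prop :=
  exists col : bool, forall e : fcar A -> fcar E, femb e ->
    (forall a, exists b, e a = g b) -> c e = col.

Definition ramsey_class (L : language) (C : fclass L) : Prop :=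
  forall A B, C A -> C B -> exists E, C E /\
    forall c : (fcar A -> fcar E) -> bool,
      exists g : fcar B -> fcar E, femb g /\ monochromatic c g.

(* Main.v *)
Require Import Defs.
From mathcomp Require Import all_boot.
From mathcomp Require Import zify.
From Stdlib Require Import Classical FunctionalExtensionality.

Lemma sat_aut (L : language) (T : Type) (I : structure L T) (sigma : T -> T) :
  is_emb I I sigma -> bijective sigma ->
  forall (p : formula L) (w w' : nat -> T), (forall m, w' m = sigma (w m)) ->
  (sat I w p <-> sat I w' p).
Proof.
move=> [inj hrel] [sinv sK Ks].
elim=> [s vs|i j|p IH|p IHp q IHq|p IHp q IHq|n p IH|n p IH] w w' Hw /=.
- have -> : (fun i => w' (vs i)) = sigma \o (fun i => w (vs i)).
    by apply: functional_extensionality => i /=; rewrite Hw.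
  exact: hrel.
- rewrite !Hw; split => [->//|]; exact: inj.
- have := IH w w' Hw; tauto.
- have := IHp w w' Hw; have := IHq w w' Hw; tauto.
- have := IHp w w' Hw; have := IHq w w' Hw; tauto.
- split => [[x Hx]|[x Hx]].
  + exists (sigma x); apply: (proj1 (IH _ _ _) Hx) => m.
    by case: (m == n) => //.
  + exists (sinv x); apply: (proj2 (IH _ _ _) Hx) => m.
    by case: (m == n); rewrite ?Ks.
- split => [Hx x|Hx x].
  + apply: (proj1 (IH (fun m => if m == n then sinv x else w m) _ _) (Hx _)) => m.
    by case: (m == n); rewrite ?Ks.
  + apply: (proj2 (IH _ (fun m => if m == n then sigma x else w' m) _) (Hx _)) => m.
    by case: (m == n).
Qed.

Arguments sat_aut {L T I sigma}.

Lemma no_up_cycle k (i0 : 'I_k) (r : 'I_k -> nat) :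
  ~ (forall j, r j < r (ordS j)).
Proof.
move=> H.
case: (@arg_maxnP _ i0 xpredT r erefl) => j _ Hj.
have := Hj (ordS j) erefl; have := H j; lia.
Qed.

Lemma no_down_cycle k (i0 : 'I_k) (r : 'I_k -> nat) :
  ~ (forall j, r (ordS j) < r j).
Proof.
move=> H.
case: (@arg_minnP _ i0 xpredT r erefl) => j _ Hj.
have := Hj (ordS j) erefl; have := H j; lia.
Qed.

Theorem mainTheorem7 (L : language) (C : fclass L) (TM : countType)
  (IM : structure L TM) (A0 : finstruct L) (phi : formula L)
  (k : nat) (v : 'I_k -> TM) :
  fraisse_class C ->
  (forall A, C A -> rigid A) ->
  fraisse_limit IM C ->
  C A0 -> #|fcar A0| = 2 ->
  (forall x y, x <> y -> induces_copy IM A0 x y ->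
     (defined_rel IM phi x y <-> ~ defined_rel IM phi y x)) ->
  (forall x y, defined_rel IM phi x y -> x <> y /\ induces_copy IM A0 x y) ->
  (* v is a directed cycle of D *)
  2 <= k -> injective v ->
  (forall i : 'I_k, defined_rel IM phi (v i) (v (ordS i))) ->
  (forall E : finstruct L, C E ->
     exists c : (fcar A0 -> fcar E) -> bool,
       forall g : fcar (induced IM (codom v)) -> fcar E,
         femb g -> ~ monochromatic c g)
  /\ ~ ramsey_class C.
Proof.
move=> HF Hrig [Hhom Hage] HA0 Hcard Hanti Hdom Hk Hinj Hcyc.
have i0 : 'I_k by exists 0; lia.
set B := induced IM (codom v).
have [Hne0 He0] := Hdom _ _ (Hcyc i0).
case: He0 => [e0 [He0emb [He0im [[a0 Ha0] [a1 Ha1]]]]].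
have a01 : a0 <> a1 by move=> E; apply: Hne0; rewrite -Ha0 -Ha1 E.
have Hfwd : forall j : 'I_k, exists e : fcar A0 -> TM, is_emb (fint A0) IM e /\
    (forall a, e a = v j \/ e a = v (ordS j)) /\ e a0 = v j /\ e a1 = v (ordS j).
  move=> j; have [Hnej Hcopy] := Hdom _ _ (Hcyc j).
  have [e [Heemb [Heim _]]] := Hcopy.
  have Hne : e a0 <> e a1 by move/(proj1 Heemb).
  exists e; split=> //; split=> //.
  case: (Heim a0) => H0.
  - split=> //; case: (Heim a1) => // H1; by exfalso; apply: Hne; rewrite H0 H1.
  - exfalso.
    have H1 : e a1 = v j.
      by case: (Heim a1) => // H1; exfalso; apply: Hne; rewrite H0 H1.
    have [sigma [Hsemb Hsbij Hs]] := Hhom A0 e0 e He0emb Heemb.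
    have Hr : defined_rel IM phi (v (ordS j)) (v j).
      have Hw : forall m, (fun n => if n == 0 then v (ordS j) else v j) m =
        sigma ((fun n => if n == 0 then v i0 else v (ordS i0)) m).
        by move=> m /=; case: (m == 0); [rewrite -Ha0 Hs H0 | rewrite -Ha1 Hs H1].
      exact: (proj1 (sat_aut Hsemb Hsbij phi _ _ Hw) (Hcyc i0)).
    exact: (proj1 (Hanti _ _ Hnej Hcopy) (Hcyc j) Hr).
have vin : forall j, v j \in codom v by move=> j; exact: codom_f.
pose bv j : fcar B := SeqSub (vin j).
have part1 : forall E : finstruct L, C E ->
     exists c : (fcar A0 -> fcar E) -> bool,
       forall g : fcar B -> fcar E, femb g -> ~ monochromatic c g.
  move=> E _.
  exists (fun e : fcar A0 -> fcar E => (enum_rank (e a0) < enum_rank (e a1))%N).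
  move=> g Hg [col Hcol].
  pose r j := nat_of_ord (enum_rank (g (bv j))).
  have Hstep : forall j, (r j < r (ordS j)) = col /\ r j <> r (ordS j).
    move=> j; have [e [Heemb [Heim [Ha0j Ha1j]]]] := Hfwd j.
    have ein : forall a, e a \in codom v by move=> a; case: (Heim a) => ->.
    pose l a : fcar B := SeqSub (ein a).
    have Hl : femb l.
      split.
      + move=> x y /(congr1 val) /=; exact: (proj1 Heemb).
      + move=> s t; exact: (proj2 Heemb s t).
    have Hgl : femb (g \o l).
      split.
      + move=> x y /= /(proj1 Hg) /(proj1 Hl); done.
      + move=> s t; apply: iff_trans (proj2 Hl s t) _; exact: (proj2 Hg s (l \o t)).
    have Hl0 : l a0 = bv j by apply: val_inj; rewrite /= Ha0j.
    have Hl1 : l a1 = bv (ordS j) by apply: val_inj; rewrite /= Ha1j.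
    split.
    + have := Hcol (g \o l) Hgl (fun a => ex_intro _ (l a) erefl).
      by rewrite /= Hl0 Hl1.
    + move=> /ord_inj /enum_rank_inj; rewrite -Hl0 -Hl1 => /(proj1 Hgl); exact: a01.
  clear Hcol; case: col Hstep => Hstep.
  - by apply: (@no_up_cycle _ i0 r) => j; rewrite (proj1 (Hstep j)).
  - apply: (@no_down_cycle _ i0 r) => j.
    have [H1 H2] := Hstep j; lia.
split => //.
move=> Hram.
have HB : C B.
  apply/(Hage B); split.
  - by apply/card_gt0P; exists (bv i0).
  - exists val; split; first exact: val_inj.
    by move=> s t; split.
have [E [HE HR]] := Hram A0 B HA0 HB.
have [c Hc] := part1 E HE.
have [g [Hg Hm]] := HR c.
exact: Hc g Hg Hm.
Qed.
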